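(* Let $\mathbb P$ be an LTF, $n\ge1$, $P\in\mathbf{LC}_n(\mathbb P)$, and let $D\subseteq\mathbb P\times_{E_0}\mathbb P$ be open dense in $\mathbb P\times_{E_0}\mathbb P$. Then there is $Q\in\mathbf{LC}_n(\mathbb P)$ with $Q\subseteq_n P$ such that $\langle Q(\to s),Q(\to t)\rangle\in D$ whenever $s,t\in 2^n$ and $s(n-1)\ne t(n-1)$.
   Context: Notation. $2^{<\omega}$ is the set of finite binary strings, $\Lambda$ the empty string, $\mathrm{lh}(s)$ the length of $s$, $2^n$ the set of strings of length $n$, $s\subseteq t$ means $t$ extends $s$, $s^\frown t$ concatenation. For strings $s,t$ with $\mathrm{lh}(s)\le\mathrm{lh}(t)$, $s\cdot t$ is the string of length $\mathrm{lh}(t)$ with $(s\cdot t)(k)=t(k)+s(k)\bmod 2$ for $k<\mathrm{lh}(s)$ and $(s\cdot t)(k)=t(k)$ otherwise; if $\mathrm{lh}(s)>\mathrm{lh}(t)$ then $s\cdot t=(s\restriction\mathrm{lh}(t))\cdot t$. For $T\subseteq 2^{<\omega}$, $s\cdot T=\{s\cdot t:t\in T\}$. For a tree $T$ and $s\in T$, $T\upharpoonright s=\{t\in T:s\subseteq t\lor t\subseteq s\}$. A perfect tree is a nonempty tree $T\subseteq 2^{<\omega}$ with no endpoints and no isolated branches; its stem $\mathrm{stem}(T)$ is the largest $s\in T$ with $T=T\upharpoonright s$. A perfect tree $T$ is large, written $T\in\mathbf{LT}$, if there are nonempty strings $q^i_n$ ($n<\omega$, $i=0,1$) with $\mathrm{lh}(q^0_n)=\mathrm{lh}(q^1_n)\ge1$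 and $q^i_n(0)=i$, such that $T$ consists exactly of all initial segments of strings $r^\frown q^{i(0)}_0{}^\frown\cdots{}^\frown q^{i(n)}_n$, where $r=\mathrm{stem}(T)$, $n<\omega$, $i(0),\dots,i(n)\in\{0,1\}$. Its splitting levels are $\mathrm{spl}_0(T)=\mathrm{lh}(r)$, $\mathrm{spl}_{n+1}(T)=\mathrm{spl}_n(T)+\mathrm{lh}(q^0_n)$. For $T\in\mathbf{LT}$ and $i\in\{0,1\}$, $T(\to i)=T\upharpoonright(\mathrm{stem}(T)^\frown i)$; for $s\in 2^n$ with $n\ge1$, $T(\to s)=(\cdots((T(\to s(0)))(\to s(1)))\cdots)(\to s(n-1))$, and $T(\to\Lambda)=T$. For $S,T\in\mathbf{LT}$ and $n<\omega$, $S\subseteq_n T$ means $S\subseteq T$ and $\mathrm{spl}_k(S)=\mathrm{spl}_k(T)$ for all $k<n$. A large-tree forcing notion (LTF) is a set $\mathbb P\subseteq\mathbf{LT}$ such that $T\upharpoonright u\in\mathbb P$ whenever $u\in T\in\mathbb P$, and $s\cdot T\in\mathbb P$ whenever $T\in\mathbb P$ and $s\in 2^{<\omega}$; it is ordered by inclusion (smaller trees are stronger conditions). A tree $T\in\mathbf{LT}$ is an $n$-collage over $\mathbb P$ if $T(\to s)\in\mathbb P$ for all $s\in 2^n$; $\mathbf{LC}_n(\mathbb P)$ denotes the set of such trees. The conditional product $\mathbb P\times_{E_0}\mathbb P$ is the set of pairs $\langle T,T'\rangle$ of trees $T,T'\in\mathbb P$ such that $T'=s\cdot T$ for some $s\in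 2^{<\omega}$, ordered componentwise: $\langle S,S'\rangle\le\langle T,T'\rangle$ iff $S\subseteq T$ and $S'\subseteq T'$. *)

(* Defs.v *)
From mathcomp Require Import all_boot.
From Stdlib Require Import ClassicalEpsilon.
Set Implicit Arguments. Unset Strict Implicit. Unset Printing Implicit Defensive.

Definition str := seq bool.
Definition tree := str -> Prop.

(* s ⊆ t (t extends s) is [prefix s t] from seq.v *)

(* s . t : flip the bits of t at positions k < lh(s) where s(k) = 1 *)
Definition dot (s t : str) : str :=
  mkseq (fun k => addb (nth false t k) (nth false s k)) (size t).

Definition dotT (s : str) (T : tree) : tree :=
  fun u => exists2 t, T t & u = dot s t.

Definition restr (T : tree) (u : str) : tree :=
  fun t => T t /\ (prefix u t \/ prefix t u).

Definition is_tree (T : tree) : Prop :=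
  forall s t, T t -> prefix s t -> T s.

Definition perfect_tree (T : tree) : Prop :=
  [/\ (exists t, T t), is_tree T,
      (forall t, T t -> exists b, T (rcons t b))
    & (forall t, T t -> exists2 u, prefix t u &
                    T (rcons u false) /\ T (rcons u true)) ].

Definition is_stem (T : tree) (r : str) : Prop :=
  [/\ T r, (forall t, T t -> prefix r t \/ prefix t r)
    & (forall r', T r' -> (forall t, T t -> prefix r' t \/ prefix t r') ->
          size r' <= size r) ].

Definition stem (T : tree) : str := epsilon (inhabits [::]) (is_stem T).

Definition LT_data (T : tree) (r : str) (q : nat -> bool -> str) : Prop :=
  [/\ is_stem T r,
      (forall n, size (q n false) = size (q n true)),
      (forall n, 1 <= size (q n false)),
      (forall n i, nth false (q n i) 0 = i)
    & (forall u, T u <-> exists n (c : nat -> bool),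
          prefix u (r ++ flatten (mkseq (fun k => q k (c k)) n.+1)))].

Definition LT (T : tree) : Prop :=
  perfect_tree T /\ exists r q, LT_data T r q.

Definition is_spl (T : tree) (k m : nat) : Prop :=
  exists r q, LT_data T r q /\ m = size r + \sum_(j < k) size (q j false).

Definition spl (T : tree) (k : nat) : nat := epsilon (inhabits 0) (is_spl T k).

Definition to1 (T : tree) (i : bool) : tree := restr T (rcons (stem T) i).
Definition toS (T : tree) (s : str) : tree := foldl to1 T s.

Definition subtree (S T : tree) : Prop := forall u, S u -> T u.

Definition sub_n (S T : tree) (n : nat) : Prop :=
  subtree S T /\ forall k, k < n -> spl S k = spl T k.

Definition LTF (P : tree -> Prop) : Prop :=
  [/\ (forall T, P T -> LT T),
      (forall T u, P T -> T u -> P (restr T u))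
    & (forall T s, P T -> P (dotT s T))].

Definition LC (n : nat) (P : tree -> Prop) (T : tree) : Prop :=
  LT T /\ forall s : str, size s = n -> P (toS T s).

Definition cprod (P : tree -> Prop) (T T' : tree) : Prop :=
  [/\ P T, P T' & exists s, forall u, T' u <-> dotT s T u].

Definition cprod_le (S S' T T' : tree) : Prop := subtree S T /\ subtree S' T'.

Definition open_dense (P : tree -> Prop) (D : tree -> tree -> Prop) : Prop :=
  [/\ (forall T T', D T T' -> cprod P T T'),
      (forall T T' S S', D T T' -> cprod P S S' -> cprod_le S S' T T' -> D S S')
    & (forall T T', cprod P T T' ->
          exists S S', D S S' /\ cprod_le S S' T T')].

(* Main.v *)
Require Import Defs.
From mathcomp Require Import all_boot.
From mathcomp Require Import zify.
From Stdlib Require Import ClassicalEpsilon FunctionalExtensionality PropExtensionality.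
Set Implicit Arguments. Unset Strict Implicit. Unset Printing Implicit Defensive.

Lemma ptrans (u v w : str) : prefix u v -> prefix v w -> prefix u w.
Proof. move=> h1 h2; exact: (prefix_trans h1 h2). Qed.

Lemma prefix_size (u v : str) : prefix u v -> size u <= size v.
Proof. by move=> /prefixP[w ->]; rewrite size_cat leq_addr. Qed.

Lemma prefix_eq_size (u v : str) : prefix u v -> size u = size v -> u = v.
Proof.
move=> /prefixP[w ->]; rewrite size_cat => /eqP; rewrite -{1}[size u]addn0 eqn_add2l.
by rewrite eq_sym size_eq0 => /eqP ->; rewrite cats0.
Qed.

Lemma prefix_nth (u v : str) i : prefix u v -> i < size u -> nth false u i = nth false v i.
Proof. by move=> /prefixP[w ->] hi; rewrite nth_cat hi. Qed.

Lemma prefix_comp (u v w : str) : prefix u w -> prefix v w -> prefix u v \/ prefix v u.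
Proof.
rewrite !prefixE => /eqP hu /eqP hv.
case: (leqP (size u) (size v)) => h.
  by left; rewrite -hv take_takel // hu.
by right; rewrite -hu take_takel ?hv // ltnW.
Qed.

Lemma prefix_comp_le (u v : str) : prefix u v \/ prefix v u -> size u <= size v -> prefix u v.
Proof.
case=> // h hs; have hs' := prefix_size h.
have e : size u = size v by apply/eqP; rewrite eqn_leq hs hs'.
by rewrite (prefix_eq_size h (esym e)) prefix_refl.
Qed.

Lemma prefix_rcons_nth (t z : str) : prefix t z -> size t < size z ->
  prefix (rcons t (nth false z (size t))) z.
Proof.
move=> /prefixP[w ->]; case: w => [|x w]; first by rewrite cats0 ltnn.
by move=> _; rewrite nth_cat ltnn subnn /= -cat_rcons prefix_prefix.
Qed.

Lemma prefix_rconsE (u r : str) i : prefix u (rcons r i) -> u = rcons r i \/ prefix u r.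
Proof.
move=> h; case: (leqP (size u) (size r)) => hs.
  right; move: h; rewrite !prefixE -cats1 take_cat.
  case: ltnP => hl //; have -> : size u = size r by apply/eqP; rewrite eqn_leq hs hl.
  by rewrite subnn take0 cats0 take_size.
left; apply: (prefix_eq_size h); apply/eqP; rewrite eqn_leq (prefix_size h) size_rcons.
exact: hs.
Qed.

Lemma prefix_rconsL (u r : str) i : prefix u (rcons r i) -> size u <= size r -> prefix u r.
Proof.
move=> /prefix_rconsE [->|//]; by rewrite size_rcons ltnn.
Qed.

Lemma rcons_both (r a : str) :
  (prefix (rcons r false) a \/ prefix a (rcons r false)) ->
  (prefix (rcons r true) a \/ prefix a (rcons r true)) -> prefix a r.
Proof.
move=> h0 h1; case: (leqP (size a) (size r)) => hs.
  case: h0 => h0; last exact: prefix_rconsL h0 hs.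
  by move: (prefix_size h0); rewrite size_rcons ltnNge hs.
have p0 : prefix (rcons r false) a by apply: prefix_comp_le h0 _; rewrite size_rcons.
have p1 : prefix (rcons r true) a by apply: prefix_comp_le h1 _; rewrite size_rcons.
have := @prefix_nth _ _ (size r) p0; have := @prefix_nth _ _ (size r) p1.
by rewrite !nth_rcons ltnn eqxx !size_rcons ltnSn => /(_ isT) <- /(_ isT).
Qed.

Lemma catsI (r a b : str) : r ++ a = r ++ b -> a = b.
Proof. by move=> /(congr1 (drop (size r))); rewrite !drop_size_cat. Qed.

Lemma rcons_dec (s : str) n : size s = n.+1 -> exists s0 b, size s0 = n /\ s = rcons s0 b.
Proof.
move=> hs; exists (take n s), (nth false s n); split.
  by rewrite size_take hs ltnSn.
by rewrite -take_nth ?hs // -hs take_size.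
Qed.

Definition tof (r : str) (q : nat -> bool -> str) : tree :=
  fun u => exists n (c : nat -> bool),
    prefix u (r ++ flatten (mkseq (fun k => q k (c k)) n.+1)).

Definition Z (r : str) (q : nat -> bool -> str) (c : nat -> bool) m :=
  r ++ flatten (mkseq (fun k => q k (c k)) m).

Definition wf (q : nat -> bool -> str) :=
  [/\ forall n, size (q n false) = size (q n true),
      forall n, 1 <= size (q n false)
    & forall n i, nth false (q n i) 0 = i].

Definition shq m (q : nat -> bool -> str) := fun k => q (m + k).

Lemma wf_shq m q : wf q -> wf (shq m q).
Proof. by case=> h1 h2 h3; split=> *; [exact: h1|exact: h2|exact: h3]. Qed.

Lemma wf_size q n b : wf q -> 0 < size (q n b).
Proof. by case=> h1 h2 _; case: b; rewrite -?h1 h2. Qed.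

Lemma q_head q n b : wf q -> q n b = b :: behead (q n b).
Proof.
move=> w; have h1 := wf_size n b w; case: w => _ _ /(_ n b); move: h1.
by case: (q n b) => [|x l] //= _ ->.
Qed.

Lemma ZS r q c m : Z r q c m.+1 = Z r q c m ++ q m (c m).
Proof. by rewrite /Z mkseqS flatten_rcons catA. Qed.

Lemma Z_mono r q c m m' : m <= m' -> prefix (Z r q c m) (Z r q c m').
Proof.
move=> /subnK <-; elim: (m' - m) => [|d IH]; first exact: prefix_refl.
by rewrite addSn ZS; apply: prefix_catl.
Qed.

Lemma Z_ext r q c c' m : (forall k, k < m -> c k = c' k) -> Z r q c m = Z r q c' m.
Proof.
elim: m => [//|m IH] h; rewrite !ZS IH ?h // => k hk; apply: h; exact: ltnW.
Qed.

Lemma size_Z r q c m : wf q -> size r + m <= size (Z r q c m).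
Proof.
move=> w; elim: m => [|m IH]; first by rewrite /Z addn0 size_cat leq_addr.
rewrite ZS size_cat addnS -addn1; apply: leq_add IH (wf_size _ _ w).
Qed.

Lemma tofE r q u : tof r q u <-> exists m c, prefix u (Z r q c m).
Proof.
split; first by case=> m [c h]; exists m.+1, c.
case=> m [c h]; exists m, c; apply: ptrans h _; exact: Z_mono.
Qed.

Lemma mkseqS0 (f : nat -> str) n : mkseq f n.+1 = f 0 :: mkseq (fun k => f k.+1) n.
Proof.
rewrite /mkseq /=; congr (_ :: _); rewrite -[1]/(1+0) iotaDl -map_comp.
by apply: eq_map.
Qed.

Lemma Z_shift r q c m :
  Z r q c m.+1 = Z (r ++ q 0 (c 0)) (shq 1 q) (fun k => c k.+1) m.
Proof. by rewrite /Z mkseqS0 /= catA. Qed.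

Lemma tof_r r q u : prefix u r -> tof r q u.
Proof. move=> h; apply/tofE; exists 0, (fun _ => false); exact: prefix_catl. Qed.

Lemma split1 r q u : tof r q u <-> exists i, tof (r ++ q 0 i) (shq 1 q) u.
Proof.
split.
  case=> m [c h]; exists (c 0); apply/tofE; exists m, (fun k => c k.+1).
  by rewrite -Z_shift.
case=> i /tofE [m [c h]]; apply/tofE.
exists m.+1, (fun k => if k is k'.+1 then c k' else i); by rewrite Z_shift.
Qed.


Lemma tof_rcons r q b : wf q -> tof r q (rcons r b).
Proof.
move=> w; apply/split1; exists b; apply: tof_r.
by rewrite (q_head _ _ w) -cat_rcons prefix_prefix.
Qed.

Lemma tof_comp r q u : tof r q u -> prefix r u \/ prefix u r.
Proof.
move=> /tofE [m [c h]]; apply: (prefix_comp _ h); exact: prefix_prefix.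
Qed.

Lemma is_stem_tof r q : wf q -> is_stem (tof r q) r.
Proof.
move=> w; split.
- by apply: tof_r; exact: prefix_refl.
- by move=> t /tof_comp.
move=> r' _ h; case: (leqP (size r') (size r)) => // hs.
have h0 := h _ (tof_rcons r false w); have h1 := h _ (tof_rcons r true w).
have p0 : prefix (rcons r false) r' by apply: prefix_comp_le _ _; [case: h0; auto|rewrite size_rcons].
have p1 : prefix (rcons r true) r' by apply: prefix_comp_le _ _; [case: h1; auto|rewrite size_rcons].
have := @prefix_nth _ _ (size r) p0; have := @prefix_nth _ _ (size r) p1.
by rewrite !nth_rcons ltnn eqxx !size_rcons ltnSn => /(_ isT) <- /(_ isT).
Qed.

Lemma stem_uniq T r1 r2 : is_stem T r1 -> is_stem T r2 -> r1 = r2.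
Proof.
case=> h1 c1 m1 [h2 c2 m2].
have s1 := m1 _ h2 c2; have s2 := m2 _ h1 c1.
have e : size r2 = size r1 by apply/eqP; rewrite eqn_leq s1 s2.
case: (c1 _ h2) => p; first by rewrite (prefix_eq_size p (esym e)).
by rewrite (prefix_eq_size p e).
Qed.

Lemma stem_spec T r : is_stem T r -> stem T = r.
Proof.
move=> h; have h' := epsilon_spec (inhabits [::]) (is_stem T) (ex_intro _ r h).
exact: stem_uniq h' h.
Qed.

Lemma stem_tof r q : wf q -> stem (tof r q) = r.
Proof. by move=> w; apply: stem_spec; exact: is_stem_tof. Qed.

Lemma perfect_tof r q : wf q -> perfect_tree (tof r q).
Proof.
move=> w; split.
- by exists r; apply: tof_r; exact: prefix_refl.
- move=> s t /tofE [m [c h]] p; apply/tofE; exists m, c; exact: ptrans p h.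
- move=> t /tofE [m [c h]].
  set M := (maxn m (size t)).+1.
  have hM : prefix t (Z r q c M) by apply: ptrans h (Z_mono _ _ _ _); rewrite /M; apply: leqW; exact: leq_maxl.
  have hs : size t < size (Z r q c M).
    apply: leq_trans _ (@size_Z r q c M w); rewrite /M addnS ltnS.
    apply: leq_trans (leq_maxr m _) (leq_addl _ _).
  exists (nth false (Z r q c M) (size t)); apply/tofE; exists M, c.
  exact: prefix_rcons_nth.
- move=> t /tofE [m [c h]]; exists (Z r q c m) => //.
  have key : forall b, tof r q (rcons (Z r q c m) b).
    move=> b; apply/tofE; exists m.+1, (fun k => if k == m then b else c k).
    rewrite ZS (@Z_ext _ _ _ c); last by move=> k hk; rewrite (ltn_eqF hk).
    by rewrite eqxx (q_head _ _ w) -cat_rcons prefix_prefix.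
  by split; apply: key.
Qed.

Lemma LT_data_tof r q : wf q -> LT_data (tof r q) r q.
Proof. by move=> w; case: (w) => h1 h2 h3; split=> //; exact: is_stem_tof. Qed.

Lemma LT_tof r q : wf q -> LT (tof r q).
Proof. by move=> w; split; [exact: perfect_tof | exists r, q; exact: LT_data_tof]. Qed.

Lemma tree_ext (T T' : tree) : (forall u, T u <-> T' u) -> T = T'.
Proof. by move=> h; apply: functional_extensionality => u; apply: propositional_extensionality. Qed.

Lemma LT_data_eq T r q : LT_data T r q -> wf q /\ T = tof r q.
Proof. by case=> _ h1 h2 h3 h4; split; [split| apply: tree_ext]. Qed.

Lemma LT_tofE T : LT T -> exists r q, wf q /\ T = tof r q.
Proof. by case=> _ [r [q /LT_data_eq h]]; exists r, q. Qed.

Lemma to1_tof r q i : wf q -> to1 (tof r q) i = tof (r ++ q 0 i) (shq 1 q).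
Proof.
move=> w; apply: tree_ext => u; rewrite /to1 /restr stem_tof //.
have hri : prefix (rcons r i) (r ++ q 0 i) by rewrite (q_head _ _ w) -cat_rcons prefix_prefix.
split.
- case=> /split1 [j hj] hc.
  case: (boolP (j == i)) => [/eqP <- //| hji].
  have hc' : prefix (rcons r i) u \/ prefix u r.
    by case: hc => hc; [left | case/prefix_rconsE: hc => [->|]; [left; exact: prefix_refl|right]].
  case: hc' => hc'; last by apply: tof_r; apply: ptrans hc' _; exact: prefix_prefix.
  exfalso; move: hji; apply/negP; rewrite negbK.
  have hrj : prefix (rcons r j) (r ++ q 0 j) by rewrite (q_head _ _ w) -cat_rcons prefix_prefix.
  have : prefix (rcons r i) (rcons r j) \/ prefix (rcons r j) (rcons r i).
    case: (tof_comp hj) => h.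
      exact: prefix_comp hc' (ptrans hrj h).
    exact: prefix_comp (ptrans hc' h) hrj.
  by case=> h; have := prefix_eq_size h; rewrite !size_rcons => /(_ erefl) /(congr1 (last false));
    rewrite !last_rcons => ->.
- move=> h; split; first by apply/split1; exists i.
  case: (tof_comp h) => h'.
    by left; exact: ptrans hri h'.
  exact: prefix_comp hri h'.
Qed.

Fixpoint Bs (r : str) (q : nat -> bool -> str) (s : str) : str :=
  if s is i :: s' then Bs (r ++ q 0 i) (shq 1 q) s' else r.

Lemma shq_shq m q : shq m (shq 1 q) = shq m.+1 q.
Proof. by apply: functional_extensionality => k; rewrite /shq add1n addSn. Qed.

Lemma shq_add m m' q : shq m (shq m' q) = shq (m' + m) q.
Proof. by apply: functional_extensionality => k; rewrite /shq addnA. Qed.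

Lemma toS_tof r q s : wf q -> toS (tof r q) s = tof (Bs r q s) (shq (size s) q).
Proof.
elim: s r q => [|i s IH] r q w.
  by rewrite /= /shq; congr tof; apply: functional_extensionality.
by rewrite /toS /= -/(toS _ s) to1_tof // IH //; exact: wf_shq.
Qed.

Lemma split_n n r q u : tof r q u <-> exists s, size s = n /\ tof (Bs r q s) (shq n q) u.
Proof.
elim: n r q => [|n IH] r q.
  have -> : shq 0 q = q by apply: functional_extensionality.
  by split; [exists [::] | case=> s [/size0nil -> ]].
rewrite split1; split.
  case=> i /IH [s [hs h]]; exists (i :: s); split; first by rewrite /= hs.
  by rewrite /= -shq_shq.
by case=> [[|i s] []] //= [hs] h; exists i; apply/IH; exists s; split=> //.
Qed.

Lemma Bs_rcons r q s b : Bs r q (rcons s b) = Bs r q s ++ q (size s) b.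
Proof. by elim: s r q => [|i s IH] r q //=; rewrite IH. Qed.

Lemma Bs_ext r q q' s : (forall j, j < size s -> q' j = q j) -> Bs r q' s = Bs r q s.
Proof.
elim: s r q q' => [|i s IH] r q q' h //=.
rewrite h // (IH _ (shq 1 q)) // => j hj; rewrite /shq h //= add1n ltnS.
Qed.

Lemma size_Bs r r' q s t : wf q -> size r = size r' -> size s = size t ->
  size (Bs r q s) = size (Bs r' q t).
Proof.
move=> w; elim: s r r' q t w => [|i s IH] r r' q [|j t] w //= hr [] hs.
apply: IH => //; first exact: wf_shq.
case: w => w1 _ _; rewrite !size_cat hr; congr (_ + _).
by case: i; case: j; rewrite ?w1.
Qed.

Lemma size_Bs_ge r q s : wf q -> size r + size s <= size (Bs r q s).
Proof.
elim: s r q => [|i s IH] r q w /=; first by rewrite addn0.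
apply: leq_trans (IH _ _ (wf_shq 1 w)); rewrite size_cat.
have := wf_size 0 i w; lia.
Qed.

Lemma size_dot w t : size (dot w t) = size t.
Proof. by rewrite size_mkseq. Qed.

Lemma nth_dot w t k : k < size t -> nth false (dot w t) k = addb (nth false t k) (nth false w k).
Proof. by move=> hk; rewrite nth_mkseq. Qed.

Lemma dot_cat w x y : dot w (x ++ y) = dot w x ++ dot (drop (size x) w) y.
Proof.
apply: (@eq_from_nth _ false); first by rewrite size_cat !size_dot size_cat.
move=> k; rewrite size_dot => hk; rewrite nth_dot // [RHS]nth_cat size_dot.
case: ltnP => hkx; first by rewrite nth_dot // nth_cat hkx.
have hk' : k - size x < size y by rewrite -(ltn_add2l (size x)) subnKC // -size_cat.
by rewrite nth_dot // nth_drop subnKC // nth_cat ltnNge hkx.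
Qed.

Lemma dot_nil y : dot [::] y = y.
Proof.
apply: (@eq_from_nth _ false); first by rewrite size_dot.
by move=> k; rewrite size_dot => hk; rewrite nth_dot // nth_nil addbF.
Qed.

Lemma dot_cat_short w x y : size w <= size x -> dot w (x ++ y) = dot w x ++ y.
Proof. by move=> h; rewrite dot_cat drop_oversize // dot_nil. Qed.

Lemma dot_prefix w u t : prefix u t -> prefix (dot w u) (dot w t).
Proof. by move=> /prefixP [z ->]; rewrite dot_cat prefix_prefix. Qed.

Lemma dot_inv w t : dot w (dot w t) = t.
Proof.
apply: (@eq_from_nth _ false); first by rewrite !size_dot.
by move=> k; rewrite !size_dot => hk; rewrite !nth_dot ?size_dot // addbK.
Qed.

Lemma dot_xor a b : size a = size b -> dot (dot a b) a = b.
Proof.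
move=> h; apply: (@eq_from_nth _ false); first by rewrite !size_dot.
move=> k; rewrite !size_dot => hk; rewrite !nth_dot -?h //.
by case: (nth false a k); case: (nth false b k).
Qed.

Lemma dotT_tof w r q : size w <= size r -> dotT w (tof r q) = tof (dot w r) q.
Proof.
move=> hw; apply: tree_ext => u; split.
  case=> t /tofE [m [c h]] ->; apply/tofE; exists m, c.
  by have := dot_prefix w h; rewrite /Z dot_cat_short.
move=> /tofE [m [c h]]; exists (dot w u); last by rewrite dot_inv.
apply/tofE; exists m, c; have := dot_prefix w h.
by rewrite /Z dot_cat_short ?size_dot // dot_inv.
Qed.

Lemma dotT_mono w (S T : tree) : subtree S T -> subtree (dotT w S) (dotT w T).
Proof. by move=> h u [t ht ->]; exists t => //; apply: h. Qed.

Lemma homog r q s t : wf q -> size s = size t ->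
  toS (tof r q) t = dotT (dot (Bs r q s) (Bs r q t)) (toS (tof r q) s).
Proof.
move=> w hst; rewrite !toS_tof // dotT_tof; last first.
  by rewrite size_dot (@size_Bs r r q s t w erefl hst).
by rewrite dot_xor ?hst // (@size_Bs r r q s t w erefl hst).
Qed.

Lemma sub_stem rho ka a q : wf ka -> wf q -> subtree (tof rho ka) (tof a q) -> prefix a rho.
Proof.
move=> wk wq h; apply: rcons_both.
  by case: (tof_comp (h _ (tof_rcons rho false wk))); auto.
by case: (tof_comp (h _ (tof_rcons rho true wk))); auto.
Qed.

Lemma q_uniq0 r q q' b : wf q -> wf q' -> tof r q = tof r q' -> q 0 b = q' 0 b.
Proof.
move=> w w' e; have := congr1 (fun T => stem (to1 T b)) e.
rewrite /= !to1_tof // !stem_tof; [by move/catsI | exact: wf_shq | exact: wf_shq].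
Qed.

Lemma q_uniq r q q' : wf q -> wf q' -> tof r q = tof r q' -> forall j b, q j b = q' j b.
Proof.
move=> w w' e j; elim: j r q q' w w' e => [|j IH] r q q' w w' e b.
  exact: (@q_uniq0 r q q' b w w' e).
have e1 := congr1 (fun T => to1 T false) e; rewrite /= !to1_tof // in e1.
rewrite -(@q_uniq0 r q q' false w w' e) in e1.
exact: (IH _ (shq 1 q) (shq 1 q') (wf_shq 1 w) (wf_shq 1 w') e1 b).
Qed.

Lemma spl_tof r q k : wf q -> spl (tof r q) k = size r + \sum_(j < k) size (q j false).
Proof.
move=> w.
have ex : exists m, is_spl (tof r q) k m.
  by exists (size r + \sum_(j < k) size (q j false)), r, q; split=> //; exact: LT_data_tof.
have := epsilon_spec (inhabits 0) (is_spl (tof r q) k) ex; rewrite -/(spl _ k).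
case=> r' [q' [hd ->]].
have er : r' = r.
  by case: hd => h _ _ _ _; apply: stem_uniq h (is_stem_tof r w).
subst r'; case/LT_data_eq: hd => w' e.
congr (_ + _); apply: eq_bigr => j _; by rewrite (q_uniq w w' e).
Qed.

Lemma toS_sub (T : tree) s : subtree (toS T s) T.
Proof.
elim: s T => [|i s IH] T u //= h.
by have := IH _ _ h; case.
Qed.

Lemma P_toS (P : tree -> Prop) r q s : LTF P -> wf q -> P (tof r q) -> P (toS (tof r q) s).
Proof.
move=> hP; elim: s r q => [|i s IH] r q w hT //=.
rewrite -/(toS _ s) to1_tof //; apply: IH; first exact: wf_shq.
rewrite -to1_tof //; case: hP => _ hr _; rewrite /to1; apply: hr => //.
by rewrite stem_tof //; exact: tof_rcons.
Qed.


Lemma dot_shift A0 A1 e0 K : size A0 = size A1 ->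
  dotT (dot A0 A1) (tof (A0 ++ e0) K) = tof (A1 ++ e0) K.
Proof.
move=> h; rewrite dotT_tof; last by rewrite size_dot size_cat -h leq_addr.
by rewrite dot_cat_short ?size_dot -?h // dot_xor.
Qed.

Lemma dot_shift0 A0 A1 K : size A0 = size A1 ->
  dotT (dot A0 A1) (tof A0 K) = tof A1 K.
Proof. by move=> h; have := dot_shift [::] K h; rewrite !cats0. Qed.

Lemma step (P : tree -> Prop) D n' r q s t :
  LTF P -> open_dense P D -> wf q -> LC n'.+1 P (tof r q) ->
  size s = n'.+1 -> size t = n'.+1 -> nth false s n' != nth false t n' ->
  exists q', [/\ wf q', (forall j, j < n' -> q' j = q j), LC n'.+1 P (tof r q'),
     (forall s'', size s'' = n'.+1 -> subtree (toS (tof r q') s'') (toS (tof r q) s''))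
   & D (toS (tof r q') s) (toS (tof r q') t)].
Proof.
move=> hP [hD1 hD2 hD3] w [_ hLC] hs ht hst.
have hP' := hP; case: hP' => hP1 hP2 hP3.
set n := n'.+1 in hs ht hLC *.
set K0 := shq n q.
have wK0 : wf K0 by exact: wf_shq.
have eA : toS (tof r q) s = tof (Bs r q s) K0 by rewrite toS_tof // hs.
have eB : toS (tof r q) t = tof (Bs r q t) K0 by rewrite toS_tof // ht.
have hst' : size s = size t by rewrite hs ht.
have cAB : cprod P (toS (tof r q) s) (toS (tof r q) t).
  split; [exact: hLC | exact: hLC |].
  by exists (dot (Bs r q s) (Bs r q t)) => u; rewrite (@homog r q s t w hst').
have [S [S' [hDS [hSA hSB]]]] := hD3 _ _ cAB.
have [PS PS' [v hv]] := hD1 _ _ hDS.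
have [rho [ka [wk eS]]] := LT_tofE (hP1 _ PS).
subst S.
set sg := nseq (size v) false.
set K := shq (size v) ka.
have wK : wf K by exact: wf_shq.
set x := Bs rho ka sg.
have eX : toS (tof rho ka) sg = tof x K by rewrite toS_tof // size_nseq.
have PX : P (tof x K) by rewrite -eX; apply: P_toS.
have XS : subtree (tof x K) (tof rho ka) by rewrite -eX; apply: toS_sub.
have hvx : size v <= size x.
  apply: leq_trans (size_Bs_ge _ _ wk); rewrite size_nseq; exact: leq_addl.
set y := dot v x.
have eY : dotT v (tof x K) = tof y K by exact: dotT_tof.
have PY : P (tof y K) by rewrite -eY; apply: hP3.
have YS' : subtree (tof y K) S'.
  by move=> u h; rewrite -eY in h; apply/hv; exact: dotT_mono XS u h.
have pa : prefix (Bs r q s) x.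
  by apply: (sub_stem wK wK0); rewrite -eA => u h; apply: hSA; apply: XS.
have pb : prefix (Bs r q t) y.
  by apply: (sub_stem wK wK0); rewrite -eB => u h; apply: hSB; apply: YS'.
case/prefixP: pa => ex ex_e; case/prefixP: pb => ey ey_e.
have hsz : size (Bs r q s) = size (Bs r q t) := size_Bs w erefl hst'.
have hexy : size ex = size ey.
  have : size y = size x by rewrite size_dot.
  by rewrite ex_e ey_e !size_cat hsz => /eqP; rewrite eqn_add2l => /eqP.
set e := nth false s n'.
pose q' j := if j < n' then q j else if j == n' then
   (fun b => q n' b ++ (if b == e then ex else ey)) else K (j - n).
have wq' : wf q'.
  case: (w) => w1 w2 w3; case: (wK) => k1 k2 k3; split=> j.
  - rewrite /q'; case: (ltnP j n') => _; first exact: w1.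
    case: (j == n'); last exact: k1.
    have hh : forall b, size (if b == e then ex else ey) = size ex.
      by move=> b; case: ifP.
    by rewrite !size_cat w1 !hh.
  - rewrite /q'; case: (ltnP j n') => _; first exact: w2.
    case: (j == n'); last exact: k2.
    by rewrite size_cat; apply: leq_trans (w2 n') (leq_addr _ _).
  - move=> i; rewrite /q'; case: (ltnP j n') => _; first exact: w3.
    case: (j == n'); last exact: k3.
    by rewrite nth_cat (wf_size _ _ w).
have q'lt : forall j, j < n' -> q' j = q j by move=> j hj; rewrite /q' hj.
have eK : shq n q' = K.
  apply: functional_extensionality => k; rewrite /shq /q'.
  have -> : (n + k < n') = false by apply/negbTE; rewrite -leqNgt /n; lia.
  have -> : (n + k == n') = false by apply/negbTE; rewrite /n; lia.
  by rewrite addKn.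
have eQ' : forall s'', size s'' = n -> toS (tof r q') s'' =
    tof (Bs r q s'' ++ (if nth false s'' n' == e then ex else ey)) K.
  move=> s'' /rcons_dec [s0 [b [h0 ->]]].
  rewrite toS_tof // size_rcons h0 eK !Bs_rcons (@Bs_ext r q q') ?h0 //.
  by rewrite /q' ltnn eqxx nth_rcons h0 ltnn eqxx catA.
have hQ : forall s'', size s'' = n ->
   P (toS (tof r q') s'') /\ subtree (toS (tof r q') s'') (toS (tof r q) s'').
  move=> s'' hs''; rewrite eQ' //.
  have hsz'' : size (Bs r q s) = size (Bs r q s'') := size_Bs w erefl (etrans hs (esym hs'')).
  have hsz''' : size (Bs r q t) = size (Bs r q s'') := size_Bs w erefl (etrans ht (esym hs'')).
  rewrite (@toS_tof r q s'') // hs''.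
  case: ifP => _.
    rewrite -(dot_shift _ _ hsz'') -ex_e; split; first exact: hP3.
    rewrite -(dot_shift0 _ hsz'').
    have hSA' : subtree (tof x K) (tof (Bs r q s) K0) by move=> u h; rewrite -eA; apply: hSA; apply: XS.
    exact: dotT_mono hSA'.
  rewrite -(dot_shift _ _ hsz''') -ey_e; split; first exact: hP3.
  rewrite -(dot_shift0 _ hsz''').
  have hSB' : subtree (tof y K) (tof (Bs r q t) K0) by move=> u h; rewrite -eB; apply: hSB; apply: YS'.
  exact: dotT_mono hSB'.
exists q'; split=> //.
- by split; [exact: LT_tof | move=> s'' h; case: (hQ _ h)].
- by move=> s'' h; case: (hQ _ h).
have hX : toS (tof r q') s = tof x K by rewrite eQ' // eqxx -ex_e.
have hY : toS (tof r q') t = tof y K.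
  by rewrite eQ' // eq_sym (negbTE hst) -ey_e.
rewrite hX hY; apply: (hD2 _ _ _ _ hDS).
  by split=> //; exists v => u; rewrite eY.
by split.
Qed.


Lemma sub_branches r q q2 n : wf q -> wf q2 ->
  (forall s'', size s'' = n -> subtree (toS (tof r q2) s'') (toS (tof r q) s'')) ->
  subtree (tof r q2) (tof r q).
Proof.
move=> w w2 h u /(split_n n) [s [hs hu]]; apply/(split_n n); exists s; split=> //.
have := h s hs u; rewrite !toS_tof // hs; apply; exact: hu.
Qed.

Fixpoint strs n : seq str :=
  if n is n'.+1 then [seq b :: s | b <- [:: false; true], s <- strs n'] else [:: [::]].

Lemma strsS n : strs n.+1 = [seq b :: s | b <- [:: false; true], s <- strs n].
Proof. by []. Qed.

Lemma strs_mem s : s \in strs (size s).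
Proof.
elim: s => [|b s IH] //; rewrite strsS; apply/allpairsP; exists (b, s); split=> //.
by case: b.
Qed.

Lemma iter (P : tree -> Prop) D n' r q (L : seq (str * str)) :
  LTF P -> open_dense P D -> wf q -> LC n'.+1 P (tof r q) ->
  exists q2, [/\ wf q2, (forall j, j < n' -> q2 j = q j), LC n'.+1 P (tof r q2),
    subtree (tof r q2) (tof r q) &
    forall p, p \in L -> size p.1 = n'.+1 -> size p.2 = n'.+1 ->
      nth false p.1 n' != nth false p.2 n' -> D (toS (tof r q2) p.1) (toS (tof r q2) p.2)].
Proof.
move=> hP hD w hLC; elim: L => [|p L IH].
  by exists q; split=> //.
case: IH => q1 [w1 e1 hLC1 sub1 hD1].
case: (boolP [&& size p.1 == n'.+1, size p.2 == n'.+1 & nth false p.1 n' != nth false p.2 n']).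
  case/and3P => /eqP h1 /eqP h2 h3.
  have [q2 [w2 e2 hLC2 br2 hDp]] := step hP hD w1 hLC1 h1 h2 h3.
  exists q2; split=> //.
  - by move=> j hj; rewrite e2 // e1.
  - move=> u hu; apply: sub1; exact: sub_branches w1 w2 br2 u hu.
  move=> p'; rewrite in_cons => /orP [/eqP -> _ _ _ //| hp] hs1 hs2 hn.
  case: (hD) => _ hO _; apply: (hO _ _ _ _ (hD1 _ hp hs1 hs2 hn)).
    case: (hLC2) => _ hL; split; [exact: hL | exact: hL |].
    by exists (dot (Bs r q2 p'.1) (Bs r q2 p'.2)) => u; rewrite (@homog r q2 p'.1 p'.2 w2) ?hs1 ?hs2.
  by split; apply: br2.
move=> hn; exists q1; split=> //.
move=> p'; rewrite in_cons => /orP [/eqP -> h1 h2 h3| hp]; last exact: hD1.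
by move: hn; rewrite h1 h2 h3 !eqxx.
Qed.

Unset Implicit Arguments.

Theorem lemma5p2 (P : tree -> Prop) (n : nat) (P0 : tree)
    (D : tree -> tree -> Prop) :
  LTF P -> 1 <= n -> LC n P P0 -> open_dense P D ->
  exists Q : tree, [/\ LC n P Q, sub_n Q P0 n &
    forall s t : str, size s = n -> size t = n ->
      nth false s n.-1 != nth false t n.-1 ->
      D (toS Q s) (toS Q t)].
Proof.
case: n => [//|n'] hP _ hLC hD.
have [r [q [w eP]]] := LT_tofE (proj1 hLC).
subst P0.
have [q2 [w2 e2 hLC2 sub2 hD2]] :=
  iter [seq (x, y) | x <- strs n'.+1, y <- strs n'.+1] hP hD w hLC.
exists (tof r q2); split=> //.
  split=> // k hk; rewrite !spl_tof //; congr (_ + _); apply: eq_bigr => j _.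
  by rewrite e2 // (leq_trans (ltn_ord j)).
move=> s t hs ht hn.
apply: (hD2 (s, t)) => //=.
apply/allpairsP; exists (s, t); split=> //.
  by have := strs_mem s; rewrite hs.
by have := strs_mem t; rewrite ht.
Qed.
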